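(* Let $a_0,a_1,\ldots$ be a sequence of integers satisfying a linear recurrence $a_{n+k}=c_{k-1}a_{n+k-1}+\cdots+c_0a_n$ for all sufficiently large $n$, with characteristic polynomial $\chi(x)=x^k-c_{k-1}x^{k-1}-\cdots-c_0$ whose complex roots $r_1,\ldots,r_k$ are pairwise distinct, and let $\beta_1,\ldots,\beta_k\in\mathbb{C}$ be such that $a_n=\sum_{i=1}^k\beta_i r_i^n$ for all sufficiently large $n$. Suppose $\chi(x)=\chi_1(x)\chi_2(x)\cdots\chi_j(x)$ where each $\chi_i(x)$ is a polynomial irreducible over $\mathbb{Q}$. If $r_{i_1},\ldots,r_{i_d}$ are the roots of $\chi_1(x)$, then either $\beta_{i_1}=\cdots=\beta_{i_d}=0$, or all of $\beta_{i_1},\ldots,\beta_{i_d}$ are nonzero.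
   Context: It is a standard fact that when the roots of $\chi$ are distinct, such coefficients $\beta_1,\dots,\beta_k$ exist. *)

(* Defs.v *)
From mathcomp Require Import all_boot all_order all_algebra.
Set Implicit Arguments. Unset Strict Implicit. Unset Printing Implicit Defensive.
Import Order.TTheory GRing.Theory Num.Theory.
Local Open Scope ring_scope.

Definition rec_charpoly (k : nat) (c : 'I_k -> int) : {poly rat} :=
  'X^k - \sum_(i < k) ((c i)%:~R)%:P * 'X^i.

Definition eventually_satisfies_rec (k : nat) (c : 'I_k -> int)
  (a : nat -> int) : Prop :=
  exists N : nat, forall n : nat, (N <= n)%N ->
    a (n + k)%N = \sum_(i < k) c i * a (n + i)%N.

(* Main.v *)
Require Import Defs.
From mathcomp Require Import all_boot all_order all_algebra.
From mathcomp Require Import ring.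
Import Order.TTheory GRing.Theory Num.Theory.
Set Implicit Arguments. Unset Strict Implicit.
Local Open Scope ring_scope.

Definition Dq (R : comNzRingType) (p : {poly R}) (y : R) : {poly R} :=
  \sum_(m < size p) (p`_m)%:P * \sum_(i < m) 'X^(m.-1 - i) * (y%:P) ^+ i.

Lemma DqE (R : comNzRingType) (p : {poly R}) y :
  ('X - y%:P) * Dq p y = p - (p.[y])%:P.
Proof.
have hp : p = \sum_(m < size p) p`_m *: 'X^m by rewrite -poly_def coefK.
rewrite /Dq mulr_sumr horner_coef [X in _ = X - _]hp rmorph_sum -sumrB.
apply: eq_bigr => m _.
by rewrite mulrCA -subrXX mulrBr mul_polyC rmorphM rmorphXn /= -mul_polyC.

Qed.

Lemma DqEv (R : comNzRingType) (p : {poly R}) y x :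
  (Dq p y).[x] = \sum_(m < size p) p`_m * \sum_(i < m) x ^+ (m.-1 - i) * y ^+ i.
Proof.
rewrite /Dq horner_sum; apply: eq_bigr => m _.
rewrite hornerM hornerC horner_sum; congr (_ * _); apply: eq_bigr => i _.
by rewrite hornerM hornerXn -rmorphXn hornerC.
Qed.
Lemma irr_common (C : numClosedFieldType) (p q : {poly rat}) (x y : C) :
  irreducible_poly p -> root (map_poly ratr p) x -> root (map_poly ratr q) x ->
  root (map_poly ratr p) y -> root (map_poly ratr q) y.
Proof.
move=> [sp irr] px qx py.
have gx : root (map_poly (ratr : rat -> C) (gcdp p q)) x by rewrite gcdp_map root_gcd px.
have p0 : p != 0 by rewrite -size_poly_gt0 (ltn_trans _ sp).
have g0 : gcdp p q != 0 by rewrite gcdp_eq0 negb_and p0.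
have sg : size (gcdp p q) != 1%N.
  have := root_size_gt1 _ gx; rewrite map_poly_eq0 size_map_poly => /(_ g0).
  by case: (size _) => [|[]].
have hgp := irr _ sg (dvdp_gcdl p q).
have pq : p %| q by rewrite -(eqp_dvdl _ hgp) dvdp_gcdr.
rewrite -(dvdp_map (ratr : {rmorphism rat -> C})) in pq.
by move: py; rewrite !root_factor_theorem => /dvdp_trans; apply.
Qed.

Theorem mainTheorem3 (C : numClosedFieldType)
  (a : nat -> int) (k : nat) (c : 'I_k -> int)
  (r : 'I_k -> C) (beta : 'I_k -> C)
  (chi1 : {poly rat}) (chis : seq {poly rat}) :
  eventually_satisfies_rec c a ->
  map_poly ratr (rec_charpoly c) = \prod_(i < k) ('X - (r i)%:P) ->
  injective r ->
  (exists N : nat, forall n : nat, (N <= n)%N ->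
      (a n)%:~R = \sum_(i < k) beta i * r i ^+ n) ->
  rec_charpoly c = chi1 * \prod_(q <- chis) q ->
  irreducible_poly chi1 ->
  (forall q : {poly rat}, q \in chis -> irreducible_poly q) ->
  (forall i : 'I_k, root (map_poly ratr chi1) (r i) -> beta i = 0) \/
  (forall i : 'I_k, root (map_poly ratr chi1) (r i) -> beta i != 0).
Proof.
move=> _ hP rinj [N hN] _ hirr _.
set chi := rec_charpoly c in hP *.
set P := map_poly ratr chi in hP.
pose d i := \prod_(l < k | l != i) (r i - r l).
have d0 i : d i != 0.
  apply/prodf_neq0 => l li; rewrite subr_eq0; apply/eqP => /rinj /eqP.
  by rewrite eq_sym (negbTE li).
have DqP i : Dq P (r i) = \prod_(l < k | l != i) ('X - (r l)%:P).
  apply: (@mulfI _ ('X - (r i)%:P)); first by rewrite polyXsubC_eq0.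
  have Pr : P.[r i] = 0 by rewrite hP horner_prod (bigD1 i) //= hornerXsubC subrr mul0r.
  by rewrite DqE Pr subr0 hP (bigD1 i).
have DqPv i l : (Dq P (r i)).[r l] = if l == i then d i else 0.
  rewrite DqP horner_prod; case: eqP => [->|/eqP li].
    by apply: eq_bigr => j _; rewrite hornerXsubC.
  by rewrite (bigD1 l) //= hornerXsubC subrr mul0r.
pose V y := \sum_(l < k) beta l * r l ^+ N * (Dq P y).[r l].
have Vr i : V (r i) = beta i * r i ^+ N * d i.
  rewrite /V (bigD1 i) //= DqPv eqxx big1 ?addr0 // => l li.
  by rewrite DqPv (negbTE li) mulr0.
pose Hq := \sum_(m < size chi) \sum_(i < m) (chi`_m * (a (N + (m.-1 - i))%N)%:~R)%:P * 'X^i.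
have HqV y : (map_poly ratr Hq).[y] = V y.
  rewrite /V /Hq rmorph_sum horner_sum.
  under [RHS]eq_bigr => l _ do rewrite DqEv size_map_poly mulr_sumr.
  rewrite [RHS]exchange_big /=; apply: eq_bigr => m _.
  rewrite rmorph_sum horner_sum.
  under [RHS]eq_bigr => l _ do rewrite coef_map !mulr_sumr.
  rewrite [RHS]exchange_big /=; apply: eq_bigr => j _.
  rewrite rmorphM /= map_polyC map_polyXn hornerM hornerC hornerXn /= rmorphM rmorph_int.
  rewrite (hN _ (leq_addr _ _)) mulr_sumr mulr_suml; apply: eq_bigr => l _.
  by rewrite exprD; ring.
have Xr j : root (map_poly ratr chi1) (r j) -> r j = 0 ->
    forall l, root (map_poly ratr chi1) (r l) -> r l = 0.
  move=> rj rj0 l rl; have := @irr_common C chi1 'X (r j) (r l) hirr rj.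
  by rewrite map_polyX /root !hornerX rj0 eqxx => /(_ isT rl)/eqP.
have [/existsP [i0 /andP [ri0 /eqP b0]] | hno] :=
  boolP [exists i, root (map_poly ratr chi1) (r i) && (beta i == 0)].
- left => i1 ri1.
  case: (eqVneq (r i0) 0) => [r0|r0].
    by have /rinj -> : r i1 = r i0 by rewrite r0 (Xr i0 ri0 r0 i1 ri1).
  have H0 : root (map_poly ratr Hq) (r i0) by rewrite /root HqV Vr b0 !mul0r.
  have := irr_common hirr ri0 H0 ri1; rewrite /root HqV Vr.
  case: (eqVneq (r i1) 0) => [r1|r1].
    by move: r0; rewrite (Xr i1 ri1 r1 i0 ri0) eqxx.
  by rewrite !mulf_eq0 expf_eq0 (negbTE r1) (negbTE (d0 i1)) andbF !orbF => /eqP.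
- right => i ri; apply: contraNneq hno => bi; apply/existsP; exists i.
  by rewrite ri bi eqxx.
Qed.
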